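(* For every $\mathcal{V}$-poset $P$, \[\mathcal{P}(P;x,y)=L(P;x,y):=\sum_{A\in\mathcal{A}(P)}x^{b(A)}y^{s(A)}.\]
   Context: All posets are finite. A $\mathcal{V}$-poset is a poset generated from the empty poset by repeatedly applying: disjoint union of $\mathcal{V}$-posets, adding a new greatest element, adding a new least element. The polynomial $\mathcal{P}$ is defined on $\mathcal{V}$-posets by: $\mathcal{P}(\emptyset;x,y)=1$; $\mathcal{P}(\bullet;x,y)=x$ for the one-element poset; $\mathcal{P}(\bigcup_iP_i;x,y)=\prod_i\mathcal{P}(P_i;x,y)$ for a disjoint union; and $\mathcal{P}(P\cup\{g\};x,y)=\mathcal{P}(P\cup\{\ell\};x,y)=\mathcal{P}(P;x,y)+y^{|P|}$ where $g$ (resp. $\ell$) is a new greatest (resp. least) element. An element $x$ is basic if: (B.1) there are no two incomparable elements $u,v$ with $x>u$ and $x>v$; (B.2) there are no two incomparable elements $u,v$ with $x<u$ and $x<v$; (B.3) there is no element $u$ with $u<x$ such that for all $w\neq u,x$ one has ($u\ge w\iff x\ge w$) and ($u\le w\iff x\le w$). An element is associated to a set $B$ of basic elements if it is comparable to every element of $B$ and incomparable to every other basic element. A non-basic element $u$ is upper if $u>b$ for some basic $b$, and lower if $u<b$ for some basic $b$. For $a\in P$: if $a$ is basic, $P_a=\emptyset$; otherwise let $B$ be the set of basic elements to which $a$ is associated; if $a$ is lower, $P_a=\{b\in P: a<b,\ \text{there is no } c \text{ with } c<b \text{ and } c \text{ incomparable to } a\}$; if $a$ is upper, $P_a=\{b\in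 P: a>b,\ \text{there is no } c \text{ with } c>b \text{ and } c \text{ incomparable to } a\}\setminus\{\ell\in P: \ell \text{ is a lower element associated to } B\}$. $\mathcal{A}(P)$ is the set of maximal antichains of $P$ (antichain: pairwise incomparable elements; maximal: not properly contained in another antichain). For $A\in\mathcal{A}(P)$, $b(A)$ is the number of basic elements in $A$ and $s(A)=\sum_{a\in A}|P_a|$. *)

(* Defs.v *)
From HB Require Import structures.
From mathcomp Require Import all_boot all_algebra.
Set Implicit Arguments. Unset Strict Implicit. Unset Printing Implicit Defensive.
Import GRing.Theory.
Local Open Scope ring_scope.

Inductive vposet : Type :=
| VEmpty : vposet
| VUnion : vposet -> vposet -> vposet
| VTop   : vposet -> vposet
| VBot   : vposet -> vposet.

Fixpoint vcarrier (t : vposet) : finType :=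
  match t with
  | VEmpty => void
  | VUnion a b => (vcarrier a + vcarrier b)%type
  | VTop a => option (vcarrier a)
  | VBot a => option (vcarrier a)
  end.

(* Order relation (<=) of the concrete poset; None is the new element. *)
Fixpoint vle (t : vposet) : rel (vcarrier t) :=
  match t return rel (vcarrier t) with
  | VEmpty => fun _ _ => true
  | VUnion a b => fun u v =>
      match u, v with
      | inl u', inl v' => vle u' v'
      | inr u', inr v' => vle u' v'
      | _, _ => false
      end
  | VTop a => fun u v =>
      match u, v with
      | _, None => true
      | None, Some _ => false
      | Some u', Some v' => vle u' v'
      end
  | VBot a => fun u v =>
      match u, v with
      | None, _ => true
      | Some _, None => false
      | Some u', Some v' => vle u' v'
      end
  end.

(* The polynomial P(P;x,y), evaluated at x y in a commutative ring.
   Adding a greatest/least element to the empty poset gives the one-element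
   poset, for which P = x. *)
Fixpoint Ppoly (R : comNzRingType) (x y : R) (t : vposet) : R :=
  match t with
  | VEmpty => 1
  | VUnion a b => Ppoly x y a * Ppoly x y b
  | VTop a | VBot a =>
      if #|{: vcarrier a}| == 0%N then x
      else Ppoly x y a + y ^+ #|{: vcarrier a}|
  end.

Section PosetNotions.
Variables (T : finType) (le : rel T).

Definition plt (u v : T) : bool := (u != v) && le u v.
Definition pcomp (u v : T) : bool := le u v || le v u.
Definition pincomp (u v : T) : bool := ~~ pcomp u v.

Definition basic (a : T) : bool :=
  [&& ~~ [exists u, exists v, [&& pincomp u v, plt u a & plt v a]],
      ~~ [exists u, exists v, [&& pincomp u v, plt a u & plt a v]] &
      ~~ [exists u, plt u a &&
            [forall w, ((w != u) && (w != a)) ==>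
               ((le w u == le w a) && (le u w == le a w))]]].

Definition assoc_set (a : T) : {set T} := [set b | basic b & pcomp a b].

Definition upper (a : T) : bool := ~~ basic a && [exists b, basic b && plt b a].
Definition lower (a : T) : bool := ~~ basic a && [exists b, basic b && plt a b].

Definition Pset (a : T) : {set T} :=
  if basic a then set0
  else if lower a then
    [set b | plt a b & ~~ [exists c, plt c b && pincomp c a]]
  else if upper a then
    [set b | plt b a & ~~ [exists c, plt b c && pincomp c a]]
      :\: [set l | lower l & assoc_set l == assoc_set a]
  else set0.

Definition antichain (A : {set T}) : bool :=
  [forall u in A, forall v in A, (u != v) ==> pincomp u v].

Definition max_antichain (A : {set T}) : bool :=
  antichain A && [forall B : {set T}, antichain B ==> ~~ (A \proper B)].

Definition bA (A : {set T}) : nat := #|[set a in A | basic a]|.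
Definition sA (A : {set T}) : nat := (\sum_(a in A) #|Pset a|)%N.

Definition Lpoly (R : comNzRingType) (x y : R) : R :=
  \sum_(A : {set T} | max_antichain A) x ^+ bA A * y ^+ sA A.

End PosetNotions.

(* Main.v *)
Require Import Defs.
From mathcomp Require Import all_boot all_algebra.
From mathcomp Require Import zify.
Import Defs.
Set Implicit Arguments. Unset Strict Implicit. Unset Printing Implicit Defensive.
Import GRing.Theory.

Section OptSum.
Variables T T1 T2 : finType.

Lemma existsO (P : pred (option T)) :
  [exists u, P u] = P None || [exists u, P (Some u)].
Proof.
apply/existsP/orP => [[[u|] H]|[H|/existsP[u H]]].
- by right; apply/existsP; exists u.
- by left.
- by exists None.
- by exists (Some u).
Qed.

Lemma forallO (P : pred (option T)) :
  [forall u, P u] = P None && [forall u, P (Some u)].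
Proof.
apply/forallP/andP => [H|[H1 /forallP H2] [u|]] //.
by split => //; apply/forallP => u.
Qed.

Lemma existsS (P : pred (T1 + T2)) :
  [exists u, P u] = [exists u, P (inl u)] || [exists u, P (inr u)].
Proof.
apply/existsP/orP => [[[u|u] H]|[/existsP[u H]|/existsP[u H]]].
- by left; apply/existsP; exists u.
- by right; apply/existsP; exists u.
- by exists (inl u).
- by exists (inr u).
Qed.

Lemma forallS (P : pred (T1 + T2)) :
  [forall u, P u] = [forall u, P (inl u)] && [forall u, P (inr u)].
Proof.
apply/forallP/andP => [H|[/forallP H1 /forallP H2] [u|u]] //.
by split; apply/forallP => u.
Qed.

Lemma big_option (R : Type) (idx : R) (op : Monoid.com_law idx)
   (F : option T -> R) :
  \big[op/idx]_(u : option T) F u = op (F None) (\big[op/idx]_(a : T) F (Some a)).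
Proof.
rewrite (bigD1 None) //=; congr (op _ _).
have -> : \big[op/idx]_(u | u != None) F u = \big[op/idx]_(u in [set Some a | a in T]) F u.
  apply: eq_bigl => -[u|] /=.
    by apply/esym/imsetP; exists u.
  by apply/esym/imsetP => -[a].
rewrite big_imset //; by move=> a b _ _ [].
Qed.

Lemma cardO (A : {set option T}) :
  #|A| = ((None \in A) + #|[set a | Some a \in A]|)%N.
Proof.
rewrite -!sum1_card !big_mkcond /= big_option /=.
congr (_ + _)%N.
by rewrite [RHS]big_mkcond; apply: eq_bigr => a _; rewrite inE.
Qed.

Lemma cardS (A : {set T1 + T2}) :
  #|A| = (#|[set a | inl a \in A]| + #|[set b | inr b \in A]|)%N.
Proof.
rewrite -!sum1_card big_mkcond /= big_sumType /=.
by congr (_ + _)%N; rewrite [RHS]big_mkcond; apply: eq_bigr => a _; rewrite inE.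
Qed.

End OptSum.
Section Poset.
Variables (T : finType) (le : rel T).
Hypothesis le_refl : forall u, le u u.
Hypothesis le_anti : forall u v, le u v -> le v u -> u = v.
Hypothesis le_trans : forall u v w, le u v -> le v w -> le u w.

Definition allc (a : T) := [forall w, pcomp le a w].
Definition chain := [forall u, forall v, pcomp le u v].
Definition down (a : T) := [set u | le u a].
Definition Cset := [set c | lower le c && allc c].
Definition maxac (A : {set T}) :=
  antichain le A && [forall z, (z \notin A) ==> [exists a in A, pcomp le z a]].

Lemma pcompC u v : pcomp le u v = pcomp le v u.
Proof. by rewrite /pcomp orbC. Qed.
Lemma pcomp_refl u : pcomp le u u.
Proof. by rewrite /pcomp le_refl. Qed.
Lemma pltE u v : plt le u v = (u != v) && le u v.
Proof. by []. Qed.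
Lemma plt_le u v : plt le u v -> le u v.
Proof. by case/andP. Qed.
Lemma plt_neq u v : plt le u v -> u != v.
Proof. by case/andP. Qed.
Lemma le_plt_trans u v w : le u v -> plt le v w -> plt le u w.
Proof.
move=> huv /andP[hvw lvw]; apply/andP; split; last exact: le_trans lvw.
apply/eqP => E; subst w; case/eqP: hvw; exact: le_anti.
Qed.
Lemma plt_le_trans u v w : plt le u v -> le v w -> plt le u w.
Proof.
move=> /andP[huv luv] lvw; apply/andP; split; last exact: le_trans lvw.
apply/eqP => E; subst w; case/eqP: huv; exact: le_anti.
Qed.
Lemma plt_antisym u v : plt le u v -> le v u -> False.
Proof. by move=> /andP[/eqP h l] l'; apply: h; apply: le_anti. Qed.

Lemma allcP a : reflect (forall w, pcomp le a w) (allc a).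
Proof. exact: forallP. Qed.
Lemma chainP : reflect (forall u v, pcomp le u v) chain.
Proof.
apply: (iffP forallP) => [H u v|H u]; first by move/forallP: (H u).
by apply/forallP.
Qed.

Lemma antichainP (A : {set T}) :
  reflect (forall u v, u \in A -> v \in A -> u != v -> pincomp le u v) (antichain le A).
Proof.
apply: (iffP forallP) => [H u v uA vA uv|H u].
  by move/implyP: (H u) => /(_ uA) /forallP /(_ v) /implyP /(_ vA) /implyP; apply.
apply/implyP => uA; apply/forallP => v; apply/implyP => vA; apply/implyP; exact: H.
Qed.

Lemma maxacP (A : {set T}) :
  reflect ((forall u v, u \in A -> v \in A -> u != v -> pincomp le u v) /\
           (forall z, z \notin A -> exists2 a, a \in A & pcomp le z a)) (maxac A).
Proof.
apply: (iffP andP) => [[/antichainP H1 /forallP H2]|[H1 H2]]; split.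
- exact: H1.
- move=> z zA; move/implyP: (H2 z) => /(_ zA) /existsP [a /andP[aA za]].
  by exists a.
- exact/antichainP.
- apply/forallP => z; apply/implyP => zA; have [a aA za] := H2 z zA.
  by apply/existsP; exists a; rewrite aA.
Qed.

Lemma maxacE (A : {set T}) : max_antichain le A = maxac A.
Proof.
rewrite /max_antichain; apply/andP/maxacP => [[/antichainP H1 /forallP H2]|[H1 H2]].
  split => // z zA.
  case: (boolP [exists a in A, pcomp le z a]) => [/exists_inP[a aA za]|/exists_inPn H].
    by exists a.
  have acB : antichain le (z |: A).
    apply/antichainP => u v; rewrite !inE => /orP[/eqP->|uA] /orP[/eqP->|vA] uv.
    - by rewrite eqxx in uv.
    - by apply: H.
    - by rewrite /pincomp pcompC; apply: H.
    - exact: H1.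
  exfalso; move/implyP: (H2 (z |: A)) => /(_ acB) /negP; apply.
  apply/properP; split; first exact: subsetUr.
  by exists z; rewrite ?inE ?eqxx.
split; first exact/antichainP.
apply/forallP => B; apply/implyP => /antichainP acB; apply/negP => /properP [sAB [z zB zA]].
have [a aA za] := H2 z zA.
have az : z != a by apply: contraNneq zA => ->.
by move: (acB z a zB (subsetP sAB a aA) az); rewrite /pincomp za.
Qed.

Lemma basic_B1 a u v : basic le a -> plt le u a -> plt le v a -> pcomp le u v.
Proof.
case/and3P => /existsPn H1 _ _ hu hv.
by move: (H1 u) => /existsPn /(_ v); rewrite hu hv !andbT /pincomp negbK.
Qed.
Lemma basic_B2 a u v : basic le a -> plt le a u -> plt le a v -> pcomp le u v.
Proof.
case/and3P => _ /existsPn H1 _ hu hv.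
by move: (H1 u) => /existsPn /(_ v); rewrite hu hv !andbT /pincomp negbK.
Qed.
Lemma basic_B3 a u : basic le a -> plt le u a ->
  ~ (forall w, w != u -> w != a -> (le w u = le w a) /\ (le u w = le a w)).
Proof.
case/and3P => _ _ /existsPn /(_ u) H hu H2; move: H; rewrite hu /=; apply/negP/negPn.
apply/forallP => w; apply/implyP => /andP[wu wa]; have [-> ->] := H2 w wu wa.
by rewrite !eqxx.
Qed.

Lemma card_down_lt u v : plt le u v -> #|down u| < #|down v|.
Proof.
move=> huv; apply: proper_card; apply/properP; split.
  apply/subsetP => w; rewrite !inE => h; apply: le_trans h (plt_le huv).
exists v; rewrite !inE ?le_refl //; apply/negP => h; exact: plt_antisym huv h.
Qed.

Lemma exists_min : 0 < #|T| -> exists m, forall u, ~~ plt le u m.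
Proof.
case/card_gt0P => t _.
case: (arg_minnP (fun m => #|down m|) (erefl true : predT t)) => m _ Hm.
exists m => u; apply/negP => hu.
by have := Hm u isT; have := card_down_lt hu; rewrite ltnNge => /negP.
Qed.

Lemma exists_max : 0 < #|T| -> exists m, forall u, ~~ plt le m u.
Proof.
case/card_gt0P => t _.
case: (arg_maxnP (fun m => #|down m|) (erefl true : predT t)) => m _ Hm.
exists m => u; apply/negP => hu.
by have := Hm u isT; have := card_down_lt hu; rewrite ltnNge => /negP.
Qed.

(* predecessor-twin: an element comparable to all with something below is not basic *)
Lemma predtwin x u : allc x -> plt le u x -> ~~ basic le x.
Proof.
move=> /allcP hx hu; apply/negP => bx.
case: (@arg_maxnP _ u (fun w => plt le w x) (fun m => #|down m|) hu) => v hv Hv.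
have vmax : forall w, plt le w x -> le w v.
  move=> w hw; have := basic_B1 bx hw hv; case/orP => // lvw.
  have [/eqP->|wv] := boolP (w == v); first exact: le_refl.
  have : plt le v w by rewrite pltE lvw eq_sym wv.
  by move/card_down_lt => lt; have := Hv w hw; rewrite /= leqNgt lt.
apply: (basic_B3 bx hv) => w wv wx.
have := hx w; rewrite pcompC; case/orP => hw.
- have pw : plt le w x by rewrite pltE wx.
  have lwv := vmax w pw.
  rewrite lwv hw; split => //.
  apply/esym; apply/idP/idP => h.
    by case/eqP: wx; apply: le_anti.
  by case/eqP: wv; apply: le_anti.
- have nwx : ~~ le w x by apply/negP => h; case/eqP: wx; apply: le_anti.
  rewrite (negbTE nwx) hw; split.
    apply/negP => h; move/negP: nwx; apply; exact: le_trans h (plt_le hv).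
  exact: le_trans (plt_le hv) hw.
Qed.

Lemma minbasic_chain m : basic le m -> (forall w, le m w) -> chain.
Proof.
move=> bm hm; apply/chainP => u v.
have [/eqP->|um] := boolP (u == m); first by rewrite /pcomp hm.
have [/eqP->|vm] := boolP (v == m); first by rewrite /pcomp hm orbT.
by apply: (basic_B2 bm); rewrite pltE hm andbT eq_sym.
Qed.


Local Open Scope ring_scope.

Lemma lowerE a : lower le a = ~~ basic le a && [exists b, basic le b && plt le a b].
Proof. by []. Qed.
Lemma upperE a : upper le a = ~~ basic le a && [exists b, basic le b && plt le b a].
Proof. by []. Qed.

Lemma Cset_allc c : c \in Cset -> allc c.
Proof. by rewrite inE => /andP[]. Qed.
Lemma Cset_lower c : c \in Cset -> lower le c.
Proof. by rewrite inE => /andP[]. Qed.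
Lemma Cset_notbasic c : c \in Cset -> ~~ basic le c.
Proof. by move/Cset_lower; rewrite lowerE => /andP[]. Qed.

Lemma noless_min u : allc u -> ~~ [exists w, plt le w u] -> forall w, le u w.
Proof.
move=> /allcP hu /existsPn H w; have := hu w; case/orP => // h.
have := H w; rewrite pltE h andbT negbK => /eqP ->; exact: le_refl.
Qed.

Lemma Cset_down c u : c \in Cset -> plt le u c -> u \in Cset.
Proof.
move=> cC huc; have /allcP hc := Cset_allc cC.
have := Cset_lower cC; rewrite lowerE => /andP[_ /existsP[b /andP[bb hcb]]].
have hub : plt le u b := le_plt_trans (plt_le huc) hcb.
have au : allc u.
  apply/allcP => w; have := hc w; case/orP => h.
    by rewrite /pcomp (le_trans (plt_le huc) h).
  exact: basic_B1 bb hub (le_plt_trans h hcb).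
rewrite inE au andbT lowerE; apply/andP; split; last first.
  by apply/existsP; exists b; rewrite bb hub.
apply/negP => bu.
case: (boolP [exists w, plt le w u]) => [/existsP[w hw]|H].
  by move: (predtwin au hw); rewrite bu.
have ch := minbasic_chain bu (noless_min au H).
have ab : allc b by apply/allcP => w; move/chainP: ch; apply.
by move: (predtwin ab hcb); rewrite bb.
Qed.

Lemma Pset_C c : c \in Cset -> #|Pset le c| = (#|T| - #|down c|)%N.
Proof.
move=> cC; have /allcP hc := Cset_allc cC.
rewrite /Pset (negbTE (Cset_notbasic cC)) (Cset_lower cC).
have -> : [set b | plt le c b & ~~ [exists d, plt le d b && pincomp le d c]] = ~: down c.
  apply/setP => b; rewrite !inE.
  have -> : [exists d, plt le d b && pincomp le d c] = false.
    by apply/existsPn => d; rewrite /pincomp pcompC hc andbF.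
  rewrite andbT pltE; have := hc b; case/orP => h.
    rewrite h andbT; apply/idP/idP => [cb|]; first by apply/negP => hb; case/eqP: cb; apply: le_anti.
    by apply: contra => /eqP <-; exact: le_refl.
  rewrite h /=; apply/negbTE; apply/negP => /andP[cb lcb]; case/eqP: cb; exact: le_anti.
by rewrite cardsCs setCK.
Qed.

Lemma rank_sum (R : comNzRingType) (F : nat -> R) (S : {set T}) :
  (forall u v, u \in S -> v \in S -> pcomp le u v) ->
  (forall u v, v \in S -> le u v -> u \in S) ->
  \sum_(c in S) F #|down c| = \sum_(i < #|S|) F i.+1.
Proof.
move Hn: #|S| => n; elim: n S Hn => [|n IH] S Hn hch hdn.
  by rewrite (cards0_eq Hn) big_set0 big_ord0.
have : (0 < #|S|)%N by rewrite Hn.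
case/card_gt0P => t tS.
case: (@arg_maxnP _ t (fun u => u \in S) (fun m => #|down m|) tS) => c cS Hc.
have dc : down c = S.
  apply/setP => u; rewrite inE; apply/idP/idP => [h|uS]; first exact: hdn h.
  have := hch u c uS cS; case/orP => // h.
  have [/eqP->|uc] := boolP (u == c); first exact: le_refl.
  have : plt le c u by rewrite pltE h eq_sym uc.
  by move/card_down_lt => lt; have := Hc u uS; rewrite /= leqNgt lt.
rewrite (bigD1 c) //= dc Hn big_ord_recr /= addrC; congr (_ + _).
have HS' : #|S :\ c| = n by move: Hn; rewrite (cardsD1 c) cS add1n => -[].
rewrite -(IH (S :\ c) HS').
- by apply: eq_bigl => u; rewrite in_setD1 andbC.
- by move=> u v; rewrite !in_setD1 => /andP[_ uS] /andP[_ vS]; apply: hch.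
- move=> u v; rewrite !in_setD1 => /andP[vc vS] luv; rewrite (hdn u v vS luv) andbT.
  apply/negP => /eqP E; subst u.
  have : v \in down c by rewrite dc.
  rewrite inE => lvc; case/eqP: vc; exact: le_anti.
Qed.

Lemma C_singleton (A : {set T}) c : maxac A -> c \in A -> c \in Cset -> A = [set c].
Proof.
move=> /maxacP[H1 _] cA cC; apply/setP => u; rewrite inE.
apply/idP/eqP => [uA|->//]; apply/eqP; apply/negP => /negP uc.
have := H1 u c uA cA uc; rewrite /pincomp pcompC.
by move/allcP: (Cset_allc cC) => ->.
Qed.

Lemma C_maxac c : c \in Cset -> maxac [set c].
Proof.
move=> cC; apply/maxacP; split.
  by move=> u v; rewrite !inE => /eqP-> /eqP->; rewrite eqxx.
move=> z _; exists c; rewrite ?inE //; rewrite pcompC.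
by move/allcP: (Cset_allc cC) => ->.
Qed.

Lemma nobelow_basic a : chain -> ~~ [exists u, plt le u a] -> basic le a.
Proof.
move=> /chainP ch /existsPn H; apply/and3P; split.
- apply/existsPn => u; apply/existsPn => v; by rewrite (negbTE (H u)) !andbF.
- apply/existsPn => u; apply/existsPn => v; by rewrite /pincomp ch.
- apply/existsPn => u; by rewrite (negbTE (H u)).
Qed.

Lemma chain_basicE a : chain -> basic le a = ~~ [exists u, plt le u a].
Proof.
move=> ch; apply/idP/idP => [ba|]; last exact: nobelow_basic.
apply/negP => /existsP[u hu]; have ac : allc a by apply/allcP => w; move/chainP: ch; apply.
by move: (predtwin ac hu); rewrite ba.
Qed.

Lemma chain_notlower a : chain -> ~~ lower le a.
Proof.
move=> ch; rewrite lowerE; apply/negP => /andP[_ /existsP[b /andP[bb hab]]].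
move: bb; rewrite (chain_basicE _ ch) => /existsPn /(_ a); by rewrite hab.
Qed.

Lemma Lpoly_chain (R : comNzRingType) (x y : R) n :
  chain -> #|T| = n.+1 -> Lpoly le x y = x + \sum_(i < n) y ^+ i.+1.
Proof.
move=> ch HT.
have Tne : (0 < #|T|)%N by rewrite HT.
have memE : forall A : {set T}, max_antichain le A = (A \in [set [set a] | a in T]).
  move=> A; rewrite maxacE; apply/idP/imsetP => [/maxacP[H1 H2]|[a _ ->]].
    have [a aA] : exists a, a \in A.
      case/card_gt0P: Tne => t _; have [tA|tA] := boolP (t \in A); first by exists t.
      by have [a aA _] := H2 t tA; exists a.
    exists a => //; apply/setP => u; rewrite inE; apply/idP/eqP => [uA|->//].
    apply/eqP; apply/negP => /negP ua; have := H1 u a uA aA ua.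
    by rewrite /pincomp; move/chainP: ch => ->.
  apply/maxacP; split; first by move=> u v; rewrite !inE => /eqP-> /eqP->; rewrite eqxx.
  by move=> z _; exists a; rewrite ?inE //; move/chainP: ch => ->.
rewrite /Lpoly (eq_bigl _ _ memE) big_imset /=; last by move=> a b _ _; apply: set1_inj.
pose F k := if k == 1%N then x else y ^+ k.-1.
have HF : forall a, x ^+ bA le [set a] * y ^+ sA le [set a] = F #|down a|.
  move=> a; rewrite /bA /sA big_set1.
  have -> : [set u in [set a] | basic le u] = if basic le a then [set a] else set0.
    case: (boolP (basic le a)) => ba; apply/setP => u; rewrite !inE.
      by case: eqP => [->|]; rewrite ?ba.
    by case: eqP => [->|]; rewrite ?(negbTE ba).
  rewrite /F; case: (boolP (basic le a)) => ba.
    have -> : #|down a| = 1%N.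
      have -> : down a = [set a]; last by rewrite cards1.
      apply/setP => u; rewrite !inE.
      apply/idP/eqP => [lua|->]; last exact: le_refl.
      move: ba; rewrite (chain_basicE _ ch) => /existsPn /(_ u); rewrite pltE lua andbT negbK.
      by move/eqP.
    by rewrite cards1 /Pset ba cards0 expr1 expr0 mulr1.
  rewrite cards0 expr0 mul1r.
  move: (ba); rewrite (chain_basicE _ ch) negbK => /existsP[u hu].
  have Hdown : #|down a| = (#|Pset le a|).+1.
    have -> : Pset le a = down a :\ a.
      rewrite /Pset (negbTE ba) (negbTE (chain_notlower a ch)).
      have -> : upper le a.
        rewrite upperE ba /=.
        have [m Hm] := exists_min Tne.
        have bm : basic le m by apply: nobelow_basic => //; apply/existsPn.
        apply/existsP; exists m; rewrite bm /= pltE.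
        have lma : le m a.
          move/chainP: ch => /(_ m a) /orP[//|lam].
          by move: (Hm u); rewrite (plt_le_trans hu lam).
        rewrite lma andbT; apply/negP => /eqP E; subst m.
        by move: (Hm u); rewrite hu.
      apply/setP => b; rewrite !inE.
      have -> : [exists c, plt le b c && pincomp le c a] = false.
        by apply/existsPn => c; rewrite /pincomp; move/chainP: ch => ->; rewrite andbF.
      by rewrite (negbTE (chain_notlower b ch)) /= andbT pltE.
    by rewrite (cardsD1 a) inE le_refl.
  have h1 : (1 < #|down a|)%N.
    have := card_down_lt hu.
    have : (0 < #|down u|)%N by apply/card_gt0P; exists u; rewrite inE le_refl.
    lia.
  by rewrite (gtn_eqF h1) Hdown.
rewrite (eq_bigr _ (fun a _ => HF a)).
have -> : \sum_a F #|down a| = \sum_(a in [set: T]) F #|down a|.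
  by apply: eq_bigl => c; rewrite inE.
rewrite rank_sum.
- rewrite cardsT HT big_ord_recl /F /=; congr (_ + _).
- by move=> u v _ _; move/chainP: ch.
- by move=> u v; rewrite !inE.
Qed.

Lemma top_identity (R : comNzRingType) (y : R) n k : (k <= n)%N ->
  \sum_(i < k) y ^+ (n - i.+1).+1 + y ^+ (n - k) = \sum_(i < k) y ^+ (n - i.+1) + y ^+ n.
Proof.
elim: k => [|k IH] hk; first by rewrite !big_ord0 subn0.
rewrite !big_ord_recr /=.
have -> : (n - k.+1).+1 = (n - k)%N by lia.
by rewrite (IH (ltnW hk)) -!addrA [y ^+ n + _]addrC.
Qed.

End Poset.

Local Open Scope ring_scope.

Section Ext.
Variables (T : finType) (le : rel T) (le' : rel (option T)).
Hypothesis hS : forall a b, le' (Some a) (Some b) = le a b.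
Hypothesis hN : forall u, pcomp le' None u.

Definition liftS (A : {set T}) : {set option T} :=
  [set u | if u is Some a then a \in A else false].
Definition preS (A : {set option T}) : {set T} := [set a | Some a \in A].

Lemma liftS_Some a A : (Some a \in liftS A) = (a \in A).
Proof. by rewrite inE. Qed.
Lemma liftS_None A : (None \in liftS A) = false.
Proof. by rewrite inE. Qed.

Lemma pcompS a b : pcomp le' (Some a) (Some b) = pcomp le a b.
Proof. by rewrite /pcomp !hS. Qed.

Lemma maxac_lift (A : {set T}) : (0 < #|T|)%N ->
  max_antichain le' (liftS A) = max_antichain le A.
Proof.
move=> Tne; rewrite !maxacE; apply/maxacP/maxacP => [[H1 H2]|[H1 H2]]; split.
- move=> u v uA vA uv; have := H1 (Some u) (Some v); rewrite !liftS_Some.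
  by rewrite /pincomp pcompS; apply.
- move=> z zA; have := H2 (Some z); rewrite liftS_Some => /(_ zA) [[a|]]; last by rewrite liftS_None.
  by rewrite liftS_Some pcompS => aA za; exists a.
- move=> [u|] [v|]; rewrite ?liftS_Some ?liftS_None // => uA vA uv.
  by rewrite /pincomp pcompS; apply: H1 => //; apply: contraNneq uv => ->.
- move=> [z|] zA.
    rewrite liftS_Some in zA; have [a aA za] := H2 z zA.
    by exists (Some a); rewrite ?liftS_Some ?pcompS.
  have [a aA] : exists a, a \in A.
    case/card_gt0P: Tne => t _; have [tA|tA] := boolP (t \in A); first by exists t.
    by have [a aA _] := H2 t tA; exists a.
  by exists (Some a); rewrite ?liftS_Some ?hN.
Qed.

Lemma maxac_None (A : {set option T}) :
  max_antichain le' A && (None \in A) = (A == [set None]).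
Proof.
rewrite maxacE; apply/andP/eqP => [[/maxacP[H1 _] NA]|->].
  apply/setP => u; rewrite inE; apply/idP/eqP => [uA|->//].
  apply/eqP; apply/negP => /negP uN; have := H1 u None uA NA uN.
  by rewrite /pincomp pcompC hN.
rewrite inE eqxx; split => //; apply/maxacP; split.
  by move=> u v; rewrite !inE => /eqP-> /eqP->; rewrite eqxx.
by move=> z _; exists None; rewrite ?inE // pcompC hN.
Qed.

Lemma sum_maxac_ext (R : comNzRingType) (F : {set option T} -> R) : (0 < #|T|)%N ->
  \sum_(A | max_antichain le' A) F A =
  F [set None] + \sum_(A | max_antichain le A) F (liftS A).
Proof.
move=> Tne; rewrite (bigID (fun A : {set option T} => None \in A)) /=; congr (_ + _).
  by rewrite (big_pred1 [set None]) // => A; rewrite maxac_None.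
rewrite (reindex_onto liftS preS).
  apply: eq_bigl => A; rewrite liftS_None maxac_lift // andbT.
  have -> : preS (liftS A) = A by apply/setP => a; rewrite !inE.
  by rewrite eqxx andbT.
move=> A /andP[_ NA]; apply/setP => -[a|]; rewrite !inE //.
by apply/esym/negbTE.
Qed.

Lemma bA_lift (hb : forall a, basic le' (Some a) = basic le a) (A : {set T}) :
  bA le' (liftS A) = bA le A.
Proof.
rewrite /bA cardO inE liftS_None /= add0n; apply: eq_card => a.
by rewrite !inE hb.
Qed.

Lemma sA_lift (A : {set T}) :
  sA le' (liftS A) = (\sum_(a in A) #|Pset le' (Some a)|)%N.
Proof.
rewrite /sA big_mkcond big_option /= liftS_None add0n [RHS]big_mkcond.
by apply: eq_bigr => a _; rewrite liftS_Some.
Qed.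

Lemma bA_None : bA le' [set None] = basic le' None.
Proof.
rewrite /bA; case: (boolP (basic le' None)) => b /=.
  rewrite -(cards1 (None : option T)); apply: eq_card => u; rewrite !inE.
  by case: eqP => [->|]; rewrite ?b.
apply/eqP; rewrite cards_eq0; apply/eqP/setP => u; rewrite !inE.
by case: eqP => [->|]; rewrite ?(negbTE b).
Qed.

Lemma sA_None : sA le' [set None] = #|Pset le' None|.
Proof. by rewrite /sA big_set1. Qed.

End Ext.

Section BasicP.
Variables (T : finType) (le : rel T).
Definition B1P a := forall u v, plt le u a -> plt le v a -> pcomp le u v.
Definition B2P a := forall u v, plt le a u -> plt le a v -> pcomp le u v.
Definition B3P a := forall u, plt le u a ->
  ~ (forall w, w != u -> w != a -> le w u = le w a /\ le u w = le a w).

Lemma basicP a : reflect [/\ B1P a, B2P a & B3P a] (basic le a).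
Proof.
apply: (iffP and3P) => [[h1 h2 h3]|[h1 h2 h3]]; split.
- move=> u v hu hv; move/existsPn: h1 => /(_ u) /existsPn /(_ v).
  by rewrite hu hv !andbT /pincomp negbK.
- move=> u v hu hv; move/existsPn: h2 => /(_ u) /existsPn /(_ v).
  by rewrite hu hv !andbT /pincomp negbK.
- move=> u hu H; move/existsPn: h3 => /(_ u); rewrite hu /= => /negP; apply.
  apply/forallP => w; apply/implyP => /andP[wu wa]; have [-> ->] := H w wu wa.
  by rewrite !eqxx.
- apply/existsPn => u; apply/existsPn => v; rewrite /pincomp.
  by apply/negP => /and3P[/negP nc hu hv]; apply: nc; apply: h1.
- apply/existsPn => u; apply/existsPn => v; rewrite /pincomp.
  by apply/negP => /and3P[/negP nc hu hv]; apply: nc; apply: h2.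
- apply/existsPn => u; apply/negP => /andP[hu /forallP H]; apply: (h3 u hu) => w wu wa.
  by move/implyP: (H w); rewrite wu wa => /(_ isT) /andP[/eqP-> /eqP->].
Qed.

Lemma assoc_all b : (assoc_set le b == [set c | basic le c]) = [forall c, basic le c ==> pcomp le b c].
Proof.
apply/eqP/forallP => [E c|H].
  apply/implyP => bc; have : c \in assoc_set le b by rewrite E inE.
  by rewrite inE => /andP[].
apply/setP => c; rewrite !inE; case: (boolP (basic le c)) => //= bc.
by move/implyP: (H c); apply.
Qed.

End BasicP.

Definition topr (T : finType) (le : rel T) : rel (option T) := fun u v =>
  match u, v with
  | _, None => true
  | None, Some _ => false
  | Some u', Some v' => le u' v'
  end.
Definition botr (T : finType) (le : rel T) : rel (option T) := fun u v =>
  match u, v with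
  | None, _ => true
  | Some _, None => false
  | Some u', Some v' => le u' v'
  end.

Lemma liftS_eq (T : finType) (A B : {set T}) : (liftS A == liftS B) = (A == B).
Proof.
apply/eqP/eqP => [E|->//]; apply/setP => a.
by rewrite -liftS_Some E liftS_Some.
Qed.

Section Top.
Variables (T : finType) (le : rel T).
Hypothesis le_refl : forall u, le u u.
Hypothesis le_anti : forall u v, le u v -> le v u -> u = v.
Hypothesis le_trans : forall u v w, le u v -> le v w -> le u w.
Local Notation le' := (topr le).

Lemma T_basicS x : basic le' (Some x) = basic le x.
Proof.
apply/basicP/basicP => [[h1 h2 h3]|[h1 h2 h3]]; split.
- by move=> u v hu hv; exact: (h1 (Some u) (Some v) hu hv).
- by move=> u v hu hv; exact: (h2 (Some u) (Some v) hu hv).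
- move=> u hu H; apply: (h3 (Some u) hu) => -[w|] wu wx; last by [].
  exact: H w wu wx.
- by move=> [u|] [v|] //= hu hv; apply: h1.
- by move=> [u|] [v|] //= hu hv; apply: h2.
- move=> [u|] //= hu H; apply: (h3 u hu) => w wu wx; exact: H (Some w) wu wx.
Qed.

Lemma T_basicN : (0 < #|T|)%N -> basic le' None = false.
Proof.
move=> Tne; apply/negbTE/negP => /basicP [h1 _ h3].
case: (boolP (chain le)) => ch.
  have [m Hm] := exists_max le_refl le_anti le_trans Tne.
  have hm : forall u, le u m.
    move=> u; move/chainP: ch => /(_ u m) /orP[//|lmu].
    have [/eqP->//|um] := boolP (u == m).
    by move: (Hm u); rewrite pltE lmu eq_sym um.
  apply: (h3 (Some m) isT) => -[w|] // wm _; split; first by rewrite /= hm.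
  apply/negbTE/negP => /= lmw; case/eqP: wm; congr Some; apply: le_anti => //.
move: ch; rewrite /chain negb_forall => /existsP[u]; rewrite negb_forall => /existsP[v] /negP; apply.
exact: (h1 (Some u) (Some v)).
Qed.

Lemma T_lowerS x : (0 < #|T|)%N -> lower le' (Some x) = lower le x.
Proof.
move=> Tne; rewrite !lowerE T_basicS existsO T_basicN //=; congr (_ && _).
by apply: eq_existsb => b; rewrite T_basicS.
Qed.

Lemma T_upperS x : (0 < #|T|)%N -> upper le' (Some x) = upper le x.
Proof.
move=> Tne; rewrite !upperE T_basicS existsO T_basicN //=; congr (_ && _).
by apply: eq_existsb => b; rewrite T_basicS.
Qed.

Lemma T_lowerN : lower le' None = false.
Proof.
by apply/negP; rewrite lowerE => /andP[_ /existsP[[b|] /andP[_ h]]].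
Qed.

Lemma T_upperN : (0 < #|T|)%N -> (exists b, basic le b) -> upper le' None.
Proof.
move=> Tne [b bb]; rewrite upperE T_basicN //=; apply/existsP; exists (Some b).
by rewrite T_basicS bb.
Qed.

Lemma T_assocS x : (0 < #|T|)%N -> assoc_set le' (Some x) = liftS (assoc_set le x).
Proof.
move=> Tne; apply/setP => -[b|]; rewrite !inE ?T_basicS //.
by rewrite T_basicN.
Qed.

Lemma T_assocN : (0 < #|T|)%N -> assoc_set le' None = liftS [set b | basic le b].
Proof.
move=> Tne; apply/setP => -[b|]; rewrite !inE ?T_basicS ?T_basicN //=.
by rewrite /pcomp /= ?orbT ?andbT.
Qed.

Lemma T_PsetS a : (0 < #|T|)%N ->
  #|Pset le' (Some a)| = (#|Pset le a| + (a \in Cset le))%N.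
Proof.
move=> Tne; rewrite /Pset T_basicS T_lowerS // T_upperS //.
have Ce : (a \in Cset le) = lower le a && allc le a by rewrite inE.
case: (boolP (basic le a)) => ba.
  by rewrite inE lowerE ba /= !cards0.
case: (boolP (lower le a)) => la.
  rewrite cardO !inE la /= addnC; congr (_ + _)%N.
    apply: eq_card => b; rewrite !inE; congr (_ && ~~ _); rewrite existsO /=.
    by apply: eq_existsb => c.
  rewrite existsO /= negb_exists /allc; congr nat_of_bool; apply: eq_forallb => c.
  by rewrite /pincomp negbK pcompC.
rewrite inE (negbTE la) addn0.
case: (boolP (upper le a)) => ua; last by rewrite !cards0.
rewrite cardO !inE andbF add0n; apply: eq_card => b; rewrite !inE.
rewrite T_lowerS // !T_assocS // liftS_eq; congr (~~ _ && (_ && ~~ _)).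
by rewrite existsO /=; apply: eq_existsb => c.
Qed.

Lemma T_PsetN : (0 < #|T|)%N -> (exists b, basic le b) ->
  (forall l, lower le l -> (forall c, basic le c -> pcomp le l c) -> allc le l) ->
  #|Pset le' None| = (#|T| - #|Cset le|)%N.
Proof.
move=> Tne hb I2; rewrite /Pset T_basicN // T_lowerN T_upperN //.
rewrite cardO !inE andbF add0n -(cardsC (Cset le)) addKn; apply: eq_card => b.
rewrite !inE.
have -> : [exists c, plt (topr le) (Some b) c && pincomp (topr le) c None] = false.
  by apply/existsPn => -[c|]; rewrite /pincomp /pcomp /= ?andbF.
rewrite T_lowerS // T_assocS // T_assocN // liftS_eq assoc_all /= andbT.
congr negb.
apply/andP/andP => [[lb H]|[lb H]]; split => //.
  apply: I2 => // c bc; by move/forallP: H => /(_ c) /implyP; apply.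
by apply/forallP => c; apply/implyP => _; move/allcP: H.
Qed.

End Top.

Section Bot.
Variables (T : finType) (le : rel T).
Hypothesis le_refl : forall u, le u u.
Hypothesis le_anti : forall u v, le u v -> le v u -> u = v.
Hypothesis le_trans : forall u v w, le u v -> le v w -> le u w.
Local Notation le' := (botr le).

Lemma notchain_ex : ~~ chain le -> exists u v, ~~ pcomp le u v.
Proof.
rewrite /chain negb_forall => /existsP[u]; rewrite negb_forall => /existsP[v] h.
by exists u, v.
Qed.

Lemma B_basicS x : ~~ chain le -> basic le' (Some x) = basic le x.
Proof.
move=> nch; apply/basicP/basicP => [[h1 h2 h3]|[h1 h2 h3]]; split.
- by move=> u v hu hv; exact: (h1 (Some u) (Some v) hu hv).
- by move=> u v hu hv; exact: (h2 (Some u) (Some v) hu hv).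
- move=> u hu H; apply: (h3 (Some u) hu) => -[w|] wu wx; last by [].
  exact: H w wu wx.
- by move=> [u|] [v|] //= hu hv; apply: h1.
- by move=> [u|] [v|] //= hu hv; apply: h2.
- move=> [u|] hu H.
    apply: (h3 u hu) => w wu wx; exact: H (Some w) wu wx.
  have hx : forall w, le x w.
    move=> w; have [/eqP->|wx] := boolP (w == x); first exact: le_refl.
    by have [_ E] := H (Some w) isT wx; rewrite /= in E; rewrite -E.
  have bx : basic le x by apply/basicP; split.
  by move/negP: nch; apply; apply: (minbasic_chain bx hx).
Qed.

Lemma B_basicN : ~~ chain le -> basic le' None = false.
Proof.
move=> /notchain_ex [u [v /negP nuv]]; apply/negbTE/negP => /basicP [_ h2 _].
by apply: nuv; exact: (h2 (Some u) (Some v)).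
Qed.

Lemma B_basicN_chain : chain le -> basic le' None.
Proof.
move/chainP => ch; apply/basicP; split.
- by move=> [u|] [v|].
- move=> [u|] [v|] //= _ _; exact: ch.
- by move=> [u|].
Qed.

Lemma B_chain : chain le -> chain le'.
Proof.
move/chainP => ch; apply/chainP => -[u|] [v|]; rewrite /pcomp //= ?orbT //.
exact: ch.
Qed.

Lemma B_lowerS x : ~~ chain le -> lower le' (Some x) = lower le x.
Proof.
move=> nch; rewrite !lowerE B_basicS // existsO B_basicN //=; congr (_ && _).
by apply: eq_existsb => b; rewrite B_basicS.
Qed.

Lemma B_upperS x : ~~ chain le -> upper le' (Some x) = upper le x.
Proof.
move=> nch; rewrite !upperE B_basicS // existsO B_basicN //=; congr (_ && _).
by apply: eq_existsb => b; rewrite B_basicS.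
Qed.

Lemma B_lowerN : ~~ chain le -> (exists b, basic le b) -> lower le' None.
Proof.
move=> nch [b bb]; rewrite lowerE B_basicN //=; apply/existsP; exists (Some b).
by rewrite B_basicS // bb.
Qed.

Lemma B_assocS x : ~~ chain le -> assoc_set le' (Some x) = liftS (assoc_set le x).
Proof.
move=> nch; apply/setP => -[b|]; rewrite !inE ?B_basicS //.
by rewrite B_basicN.
Qed.

Lemma B_assocN : ~~ chain le -> assoc_set le' None = liftS [set b | basic le b].
Proof.
move=> nch; apply/setP => -[b|]; rewrite !inE ?B_basicS ?B_basicN //=.
by rewrite /pcomp /= ?orbT ?andbT.
Qed.

Lemma B_PsetS a : ~~ chain le -> (exists b, basic le b) ->
  #|Pset le' (Some a)| = #|Pset le a|.
Proof.
move=> nch hb; rewrite /Pset B_basicS // B_lowerS // B_upperS //.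
case: (boolP (basic le a)) => ba /=; first by rewrite !cards0.
case: (boolP (lower le a)) => la /=.
  rewrite cardO !inE /= add0n; apply: eq_card => b; rewrite !inE.
  congr (_ && ~~ _); rewrite existsO /=.
  by apply: eq_existsb => c.
case: (boolP (upper le a)) => ua /=; last by rewrite !cards0.
rewrite cardO !inE.
have -> : (~~ (lower le' None && (assoc_set le' None == assoc_set le' (Some a))) &&
     (plt le' None (Some a) && ~~ [exists c, plt le' None c && pincomp le' c (Some a)])) = false.
  apply/negP => /andP[/negP H /andP[_ /negP H2]].
  case: (boolP (allc le a)) => aa.
    apply: H; rewrite B_lowerN // B_assocN // B_assocS // liftS_eq eq_sym assoc_all.
    by apply/forallP => c; apply/implyP => _; move/allcP: aa.
  apply: H2; move: aa; rewrite /allc negb_forall => /existsP[c hc].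
  by apply/existsP; exists (Some c); rewrite /pincomp pcompC.
rewrite add0n; apply: eq_card => b; rewrite !inE.
rewrite B_lowerS // !B_assocS // liftS_eq; congr (~~ _ && (_ && ~~ _)).
by rewrite existsO /=; apply: eq_existsb => c.
Qed.

Lemma B_PsetN : ~~ chain le -> (exists b, basic le b) -> #|Pset le' None| = #|T|.
Proof.
move=> nch hb; rewrite /Pset B_basicN // B_lowerN //.
rewrite cardO !inE /= add0n -cardsT; apply: eq_card => b; rewrite !inE /=.
by apply/negP => /existsP[[c|] /andP[_]]; rewrite /pincomp /pcomp /= ?orbT.
Qed.

End Bot.

Section Union.
Variables (T1 T2 : finType) (le1 : rel T1) (le2 : rel T2).
Definition unr : rel (T1 + T2) := fun u v =>
  match u, v with
  | inl a, inl b => le1 a b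
  | inr a, inr b => le2 a b
  | _, _ => false
  end.
Local Notation leU := unr.

Definition joinS (A1 : {set T1}) (A2 : {set T2}) : {set T1 + T2} :=
  [set u | match u with inl a => a \in A1 | inr b => b \in A2 end].
Definition preL (A : {set T1 + T2}) : {set T1} := [set a | inl a \in A].
Definition preR (A : {set T1 + T2}) : {set T2} := [set a | inr a \in A].

Lemma U_basicL x : basic leU (inl x) = basic le1 x.
Proof.
apply/basicP/basicP => [[h1 h2 h3]|[h1 h2 h3]]; split.
- by move=> u v hu hv; exact: (h1 (inl u) (inl v) hu hv).
- by move=> u v hu hv; exact: (h2 (inl u) (inl v) hu hv).
- move=> u hu H; apply: (h3 (inl u) hu) => -[w|w] wu wx; last by [].
  exact: H w wu wx.
- by move=> [u|u] [v|v] //= hu hv; apply: h1.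
- by move=> [u|u] [v|v] //= hu hv; apply: h2.
- move=> [u|u] //= hu H; apply: (h3 u hu) => w wu wx; exact: H (inl w) wu wx.
Qed.

Lemma U_basicR x : basic leU (inr x) = basic le2 x.
Proof.
apply/basicP/basicP => [[h1 h2 h3]|[h1 h2 h3]]; split.
- by move=> u v hu hv; exact: (h1 (inr u) (inr v) hu hv).
- by move=> u v hu hv; exact: (h2 (inr u) (inr v) hu hv).
- move=> u hu H; apply: (h3 (inr u) hu) => -[w|w] wu wx; first by [].
  exact: H w wu wx.
- by move=> [u|u] [v|v] //= hu hv; apply: h1.
- by move=> [u|u] [v|v] //= hu hv; apply: h2.
- move=> [u|u] //= hu H; apply: (h3 u hu) => w wu wx; exact: H (inr w) wu wx.
Qed.

Lemma U_lowerL x : lower leU (inl x) = lower le1 x.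
Proof.
rewrite !lowerE U_basicL existsS; congr (_ && _).
rewrite orbC; have -> : [exists u, basic leU (inr u) && plt leU (inl x) (inr u)] = false.
  by apply/existsPn => u; rewrite /plt /= ?andbF.
by apply: eq_existsb => b; rewrite U_basicL.
Qed.
Lemma U_lowerR x : lower leU (inr x) = lower le2 x.
Proof.
rewrite !lowerE U_basicR existsS; congr (_ && _).
have -> : [exists u, basic leU (inl u) && plt leU (inr x) (inl u)] = false.
  by apply/existsPn => u; rewrite /plt /= ?andbF.
by apply: eq_existsb => b; rewrite U_basicR.
Qed.
Lemma U_upperL x : upper leU (inl x) = upper le1 x.
Proof.
rewrite !upperE U_basicL existsS; congr (_ && _).
rewrite orbC; have -> : [exists u, basic leU (inr u) && plt leU (inr u) (inl x)] = false.
  by apply/existsPn => u; rewrite /plt /= ?andbF.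
by apply: eq_existsb => b; rewrite U_basicL.
Qed.
Lemma U_upperR x : upper leU (inr x) = upper le2 x.
Proof.
rewrite !upperE U_basicR existsS; congr (_ && _).
have -> : [exists u, basic leU (inl u) && plt leU (inl u) (inr x)] = false.
  by apply/existsPn => u; rewrite /plt /= ?andbF.
by apply: eq_existsb => b; rewrite U_basicR.
Qed.

Lemma U_assocL x : assoc_set leU (inl x) = joinS (assoc_set le1 x) set0.
Proof.
apply/setP => -[b|b]; rewrite !inE ?U_basicL //.
by rewrite /pcomp /= andbF.
Qed.
Lemma U_assocR x : assoc_set leU (inr x) = joinS set0 (assoc_set le2 x).
Proof.
apply/setP => -[b|b]; rewrite !inE ?U_basicR //.
by rewrite /pcomp /= andbF.
Qed.

Lemma joinS_eq A1 A2 B1 B2 : (joinS A1 A2 == joinS B1 B2) = (A1 == B1) && (A2 == B2).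
Proof.
apply/eqP/andP => [E|[/eqP-> /eqP->]//]; split; apply/eqP/setP => a.
  by have := congr1 (fun S : {set T1 + T2} => inl a \in S) E; rewrite !inE.
by have := congr1 (fun S : {set T1 + T2} => inr a \in S) E; rewrite !inE.
Qed.

Lemma U_PsetL a : #|Pset leU (inl a)| = #|Pset le1 a|.
Proof.
rewrite /Pset U_basicL U_lowerL U_upperL.
case: (boolP (basic le1 a)) => ba /=; first by rewrite !cards0.
case: (boolP (lower le1 a)) => la /=.
  rewrite cardS; have -> : #|[set b | inr b \in [set b0 | plt leU (inl a) b0 &
        ~~ [exists c, plt leU c b0 && pincomp leU c (inl a)]]]| = 0%N.
    by apply/eqP; rewrite cards_eq0; apply/eqP/setP => b; rewrite !inE /plt /= ?andbF.
  rewrite addn0; apply: eq_card => b; rewrite !inE; congr (_ && ~~ _).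
  rewrite existsS; have -> : [exists u, plt leU (inr u) (inl b) && pincomp leU (inr u) (inl a)] = false.
    by apply/existsPn => u; rewrite /plt /= ?andbF.
  by rewrite orbF; apply: eq_existsb.
case: (boolP (upper le1 a)) => ua /=; last by rewrite !cards0.
rewrite cardS; have -> : #|[set b | inr b \in [set b0 | plt leU b0 (inl a) &
      ~~ [exists c, plt leU b0 c && pincomp leU c (inl a)]]
      :\: [set l | lower leU l & assoc_set leU l == assoc_set leU (inl a)]]| = 0%N.
  by apply/eqP; rewrite cards_eq0; apply/eqP/setP => b; rewrite !inE /plt /= ?andbF.
rewrite addn0; apply: eq_card => b; rewrite !inE U_lowerL !U_assocL joinS_eq eqxx andbT.
congr (~~ _ && (_ && ~~ _)).
rewrite existsS; have -> : [exists u, plt leU (inl b) (inr u) && pincomp leU (inr u) (inl a)] = false.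
  by apply/existsPn => u; rewrite /plt /= ?andbF.
by rewrite orbF; apply: eq_existsb.
Qed.

Lemma U_PsetR a : #|Pset leU (inr a)| = #|Pset le2 a|.
Proof.
rewrite /Pset U_basicR U_lowerR U_upperR.
case: (boolP (basic le2 a)) => ba /=; first by rewrite !cards0.
case: (boolP (lower le2 a)) => la /=.
  rewrite cardS; have -> : #|[set b | inl b \in [set b0 | plt leU (inr a) b0 &
        ~~ [exists c, plt leU c b0 && pincomp leU c (inr a)]]]| = 0%N.
    by apply/eqP; rewrite cards_eq0; apply/eqP/setP => b; rewrite !inE /plt /= ?andbF.
  rewrite add0n; apply: eq_card => b; rewrite !inE; congr (_ && ~~ _).
  rewrite existsS; have -> : [exists u, plt leU (inl u) (inr b) && pincomp leU (inl u) (inr a)] = false.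
    by apply/existsPn => u; rewrite /plt /= ?andbF.
  by apply: eq_existsb.
case: (boolP (upper le2 a)) => ua /=; last by rewrite !cards0.
rewrite cardS; have -> : #|[set b | inl b \in [set b0 | plt leU b0 (inr a) &
      ~~ [exists c, plt leU b0 c && pincomp leU c (inr a)]]
      :\: [set l | lower leU l & assoc_set leU l == assoc_set leU (inr a)]]| = 0%N.
  by apply/eqP; rewrite cards_eq0; apply/eqP/setP => b; rewrite !inE /plt /= ?andbF.
rewrite add0n; apply: eq_card => b; rewrite !inE U_lowerR !U_assocR joinS_eq eqxx.
congr (~~ _ && (_ && ~~ _)).
rewrite existsS; have -> : [exists u, plt leU (inr b) (inl u) && pincomp leU (inl u) (inr a)] = false.
  by apply/existsPn => u; rewrite /plt /= ?andbF.
by apply: eq_existsb.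
Qed.

Lemma maxac_join A1 A2 :
  max_antichain leU (joinS A1 A2) = max_antichain le1 A1 && max_antichain le2 A2.
Proof.
rewrite !maxacE; apply/maxacP/andP => [[H1 H2]|[/maxacP[H1 H2] /maxacP[K1 K2]]].
  split; apply/maxacP; split.
  - move=> u v uA vA uv; have := H1 (inl u) (inl v); rewrite !inE; exact.
  - move=> z zA; have := H2 (inl z); rewrite inE => /(_ zA) [[a|a]]; rewrite inE // => aA za.
    by exists a.
  - move=> u v uA vA uv; have := H1 (inr u) (inr v); rewrite !inE; exact.
  - move=> z zA; have := H2 (inr z); rewrite inE => /(_ zA) [[a|a]]; rewrite inE // => aA za.
    by exists a.
split.
  move=> [u|u] [v|v]; rewrite !inE => uA vA uv //=.
  - by apply: H1 => //; apply: contraNneq uv => ->.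
  - by apply: K1 => //; apply: contraNneq uv => ->.
move=> [z|z]; rewrite inE => zA.
  by have [a aA za] := H2 z zA; exists (inl a); rewrite ?inE.
by have [a aA za] := K2 z zA; exists (inr a); rewrite ?inE.
Qed.

Lemma bA_join A1 A2 : bA leU (joinS A1 A2) = (bA le1 A1 + bA le2 A2)%N.
Proof.
rewrite /bA cardS; congr (_ + _)%N; apply: eq_card => a; rewrite !inE.
  by rewrite U_basicL.
by rewrite U_basicR.
Qed.

Lemma sA_join A1 A2 : sA leU (joinS A1 A2) = (sA le1 A1 + sA le2 A2)%N.
Proof.
rewrite /sA big_mkcond big_sumType /=; congr (_ + _)%N; rewrite [RHS]big_mkcond;
  apply: eq_bigr => a _; rewrite inE.
  by rewrite U_PsetL.
by rewrite U_PsetR.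
Qed.

Lemma Lpoly_union (R : comNzRingType) (x y : R) :
  Lpoly leU x y = Lpoly le1 x y * Lpoly le2 x y.
Proof.
rewrite /Lpoly big_distrlr /= pair_big /=.
rewrite (reindex_onto (fun p : {set T1} * {set T2} => joinS p.1 p.2) (fun A => (preL A, preR A))).
  apply: eq_big => [[A1 A2]|[A1 A2] _] /=.
    rewrite maxac_join.
    have -> : preL (joinS A1 A2) = A1 by apply/setP => a; rewrite !inE.
    have -> : preR (joinS A1 A2) = A2 by apply/setP => a; rewrite !inE.
    by rewrite eqxx andbT.
  by rewrite bA_join sA_join !exprD mulrACA.
by move=> A _; apply/setP => -[a|a]; rewrite !inE.
Qed.

End Union.

Local Open Scope ring_scope.

Lemma basic_None_empty (T : finType) (le' : rel (option T)) :
  #|T| = 0%N -> basic le' None.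
Proof.
move=> HT; have T0 : forall t : T, False.
  by move=> t; move: HT; rewrite (cardD1 t) inE.
apply/basicP; split.
- by move=> [u|] [v|] //; case: (T0 u).
- by move=> [u|] [v|] //; case: (T0 u).
- by move=> [u|] //; case: (T0 u).
Qed.

Lemma Lpoly_single (T : finType) (le' : rel (option T)) (R : comNzRingType) (x y : R) :
  #|T| = 0%N -> Lpoly le' x y = x.
Proof.
move=> HT; have T0 : forall t : T, False.
  by move=> t; move: HT; rewrite (cardD1 t) inE.
rewrite /Lpoly (big_pred1 [set None]) => [|A].
  rewrite bA_None sA_None basic_None_empty // /Pset basic_None_empty //.
  by rewrite cards0 expr1 expr0 mulr1.
rewrite maxacE /=; apply/maxacP/eqP => [[H1 H2]|->].
  have NA : None \in A.
    apply/negPn/negP => NA; have [[a|] aA _] := H2 None NA; first by case: (T0 a).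
    by rewrite aA in NA.
  by apply/setP => -[a|]; [case: (T0 a) | rewrite inE NA].
split; first by move=> u v; rewrite !inE => /eqP-> /eqP->; rewrite eqxx.
by move=> [z|]; [case: (T0 z) | rewrite inE].
Qed.

Section TopBotL.
Variables (T : finType) (le : rel T).
Hypothesis r : forall u, le u u.
Hypothesis an : forall u v, le u v -> le v u -> u = v.
Hypothesis tr : forall u v w, le u v -> le v w -> le u w.

Lemma split_C (R : comNzRingType) (H : {set T} -> R) :
  \sum_(A | max_antichain le A) H A =
  \sum_(A | max_antichain le A && ~~ [exists c in Cset le, c \in A]) H A +
  \sum_(c in Cset le) H [set c].
Proof.
rewrite (bigID (fun A : {set T} => [exists c in Cset le, c \in A])) /= addrC; congr (_ + _).
have -> : \sum_(c in Cset le) H [set c] = \sum_(A in [set [set c] | c in Cset le]) H A.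
  by rewrite big_imset // => c d _ _ /setP /(_ c); rewrite !inE eqxx => /esym/eqP.
apply: eq_bigl => A; rewrite maxacE; apply/andP/imsetP => [[mA /exists_inP[c cC cA]]|[c cC ->]].
  by exists c; last exact: C_singleton mA cA cC.
split; first exact: C_maxac.
by apply/existsP; exists c; rewrite cC inE eqxx.
Qed.

Lemma bA_C c : c \in Cset le -> bA le [set c] = 0%N.
Proof.
move=> cC; apply/eqP; rewrite /bA cards_eq0; apply/eqP/setP => u; rewrite !inE.
by case: eqP => [->|]; rewrite ?(negbTE (Cset_notbasic cC)).
Qed.

Lemma C_rank (R : comNzRingType) (F : nat -> R) :
  \sum_(c in Cset le) F #|down le c| = \sum_(i < #|Cset le|) F i.+1.
Proof.
apply: (rank_sum r an tr).
  move=> u v uC _; move/allcP: (Cset_allc uC); apply.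
move=> u v vC luv; have [/eqP->//|uv] := boolP (u == v).
by apply: (Cset_down r an tr vC); rewrite pltE uv.
Qed.

Lemma Lpoly_top (R : comNzRingType) (x y : R) : (0 < #|T|)%N ->
  (exists b, basic le b) ->
  (forall l, lower le l -> (forall c, basic le c -> pcomp le l c) -> allc le l) ->
  Lpoly (topr le) x y = Lpoly le x y + y ^+ #|T|.
Proof.
move=> Tne hb I2.
have hS : forall a b, topr le (Some a) (Some b) = le a b by [].
have hN : forall u, pcomp (topr le) None u by case => [a|]; rewrite /pcomp /= ?orbT.
rewrite /Lpoly (sum_maxac_ext hS hN _ Tne) bA_None sA_None (T_basicN r an tr Tne).
rewrite (T_PsetN r an tr Tne hb I2) expr0 mul1r.
rewrite (eq_bigr (fun A => x ^+ bA le A * y ^+ (\sum_(a in A) (#|Pset le a| + (a \in Cset le)))%N)); last first.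
  move=> A _; rewrite (bA_lift (T_basicS le)) sA_lift; congr (_ * _); congr (_ ^+ _).
  by apply: eq_bigr => a _; rewrite (T_PsetS r an tr a Tne).
rewrite split_C [in RHS]split_C.
have -> : \sum_(A | max_antichain le A && ~~ [exists c in Cset le, c \in A])
     x ^+ bA le A * y ^+ (\sum_(a in A) (#|Pset le a| + (a \in Cset le)))%N =
   \sum_(A | max_antichain le A && ~~ [exists c in Cset le, c \in A])
     x ^+ bA le A * y ^+ sA le A.
  apply: eq_bigr => A /andP[_ /exists_inPn H]; congr (_ * _); congr (_ ^+ _).
  rewrite /sA; apply: eq_bigr => a aA.
  have aC : (a \in Cset le) = false by apply/negbTE/negP => aC; move: (H a aC); rewrite aA.
  by rewrite aC addn0.
set D := \sum_(A | _) _.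
have E1 : \sum_(c in Cset le) x ^+ bA le [set c] * y ^+ (\sum_(a in [set c]) (#|Pset le a| + (a \in Cset le)))%N
    = \sum_(i < #|Cset le|) y ^+ (#|T| - i.+1).+1.
  rewrite -(C_rank (fun d => y ^+ (#|T| - d).+1)); apply: eq_bigr => c cC; rewrite bA_C // big_set1 cC expr0 mul1r.
  by rewrite (Pset_C r an cC) addn1.
have E2 : \sum_(c in Cset le) x ^+ bA le [set c] * y ^+ sA le [set c]
    = \sum_(i < #|Cset le|) y ^+ (#|T| - i.+1).
  rewrite -(C_rank (fun d => y ^+ (#|T| - d))); apply: eq_bigr => c cC; rewrite bA_C // /sA big_set1 expr0 mul1r.
  by rewrite (Pset_C r an cC).
rewrite E1 E2.
have := top_identity y (max_card (mem (Cset le))) => E.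
by rewrite addrCA [y ^+ (#|T| - _) + _]addrC E addrA.
Qed.

Lemma Lpoly_bot (R : comNzRingType) (x y : R) : (0 < #|T|)%N -> ~~ chain le ->
  (exists b, basic le b) ->
  Lpoly (botr le) x y = Lpoly le x y + y ^+ #|T|.
Proof.
move=> Tne nch hb.
have hS : forall a b, botr le (Some a) (Some b) = le a b by [].
have hN : forall u, pcomp (botr le) None u by case => [a|]; rewrite /pcomp /= ?orbT.
rewrite /Lpoly (sum_maxac_ext hS hN _ Tne) bA_None sA_None (B_basicN nch).
rewrite (B_PsetN r nch hb) expr0 mul1r addrC; congr (_ + _).
apply: eq_bigr => A _; rewrite (bA_lift (fun a => B_basicS r a nch)) sA_lift; congr (_ * _); congr (_ ^+ _).
by apply: eq_bigr => a _; rewrite (B_PsetS r a nch hb).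
Qed.

End TopBotL.

Lemma vle_refl (t : vposet) : forall u : vcarrier t, vle u u.
Proof.
elim: t => [|a IHa b IHb|a IH|a IH] /=; [by case | by case | by case | by case].
Qed.

Lemma vle_anti (t : vposet) : forall u v : vcarrier t, vle u v -> vle v u -> u = v.
Proof.
elim: t => [|a IHa b IHb|a IH|a IH] /=.
- by case.
- move=> [u|u] [v|v] //= h1 h2; f_equal; first [exact: IHa h1 h2 | exact: IHb h1 h2].
- by move=> [u|] [v|] //= h1 h2; congr Some; apply: IH.
- by move=> [u|] [v|] //= h1 h2; congr Some; apply: IH.
Qed.

Lemma vle_trans (t : vposet) : forall u v w : vcarrier t, vle u v -> vle v w -> vle u w.
Proof.
elim: t => [|a IHa b IHb|a IH|a IH] /=.
- by case.
- move=> [u|u] [v|v] [w|w] //=; first [exact: IHa | exact: IHb].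
- move=> [u|] [v|] [w|] //=; apply: IH.
- move=> [u|] [v|] [w|] //=; apply: IH.
Qed.

Lemma card_sumT (T1 T2 : finType) : #|{: T1 + T2}| = (#|T1| + #|T2|)%N.
Proof.
exact: card_sum.
Qed.

Lemma I1 (t : vposet) : (0 < #|vcarrier t|)%N -> exists b, basic (@vle t) b.
Proof.
elim: t => [|a IHa b IHb|a IH|a IH].
- by case/card_gt0P => -[].
- move=> H; rewrite /= card_sum in H.
  case: (posnP #|vcarrier a|) => Ha.
    have [c bc] : exists c, basic (@vle b) c by apply: IHb; rewrite Ha in H.
    by exists (inr c); rewrite (U_basicR (@vle a) (@vle b) c).
  have [c bc] := IHa Ha.
  by exists (inl c); rewrite (U_basicL (@vle a) (@vle b) c).
- move=> _; case: (posnP #|vcarrier a|) => Ha.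
    by exists None; apply: basic_None_empty.
  have [c bc] := IH Ha.
  by exists (Some c); rewrite (T_basicS (@vle a) c).
- move=> _; case: (posnP #|vcarrier a|) => Ha.
    by exists None; apply: basic_None_empty.
  case: (boolP (chain (@vle a))) => ch.
    by exists None; apply: (B_basicN_chain ch).
  have [c bc] := IH Ha.
  by exists (Some c); rewrite (B_basicS (@vle_refl a) c ch).
Qed.

Lemma I2 (t : vposet) : forall l : vcarrier t, lower (@vle _) l ->
  (forall c, basic (@vle _) c -> pcomp (@vle _) l c) -> allc (@vle _) l.
Proof.
elim: t => [|a IHa b IHb|a IH|a IH].
- by case.
-   move=> [l|l] /= lo H.
  + have Hb0 : #|vcarrier b| = 0%N.
      apply/eqP; rewrite -leqn0 leqNgt; apply/negP => /I1 [c bc].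
      have := H (inr c); rewrite /= (U_basicR (@vle a) (@vle b) c) bc => /(_ isT).
      by rewrite /pcomp.
    change (is_true (lower (unr (@vle a) (@vle b)) (inl l))) in lo.
    rewrite (U_lowerL (@vle a) (@vle b) l) in lo.
    have al : allc (@vle _) l.
      apply: IHa => // c bc; have := H (inl c).
      by rewrite (U_basicL (@vle a) (@vle b) c) bc => /(_ isT).
    apply/allcP => -[w|w]; first by move/allcP: al; apply.
    by move: Hb0; rewrite (cardD1 w) inE.
  + have Ha0 : #|vcarrier a| = 0%N.
      apply/eqP; rewrite -leqn0 leqNgt; apply/negP => /I1 [c bc].
      have := H (inl c); rewrite /= (U_basicL (@vle a) (@vle b) c) bc => /(_ isT).
      by rewrite /pcomp.
    change (is_true (lower (unr (@vle a) (@vle b)) (inr l))) in lo.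
    rewrite (U_lowerR (@vle a) (@vle b) l) in lo.
    have al : allc (@vle _) l.
      apply: IHb => // c bc; have := H (inr c).
      by rewrite (U_basicR (@vle a) (@vle b) c) bc => /(_ isT).
    apply/allcP => -[w|w]; last by move/allcP: al; apply.
    by move: Ha0; rewrite (cardD1 w) inE.
- move=> [l|] lo H; last by apply/allcP => -[w|]; rewrite /pcomp /= ?orbT.
  have Ha : (0 < #|vcarrier a|)%N by apply/card_gt0P; exists l.
  change (is_true (lower (topr (@vle a)) (Some l))) in lo.
  rewrite (T_lowerS (@vle_refl a) (@vle_anti a) (@vle_trans a) l Ha) in lo.
  have al : allc (@vle _) l.
    apply: IH => // c bc; have := H (Some c).
    by rewrite (T_basicS (@vle a) c) bc => /(_ isT).
  by apply/allcP => -[w|]; [move/allcP: al; apply | rewrite /pcomp /= ?orbT].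

- move=> [l|] lo H; last by apply/allcP => -[w|]; rewrite /pcomp /= ?orbT.
  case: (boolP (chain (@vle a))) => ch.
    apply/allcP => w; move/chainP: (B_chain ch); apply.
  change (is_true (lower (botr (@vle a)) (Some l))) in lo.
  rewrite (B_lowerS (@vle_refl a) l ch) in lo.
  have al : allc (@vle _) l.
    apply: IH => // c bc; have := H (Some c).
    by rewrite (B_basicS (@vle_refl a) c ch) bc => /(_ isT).
  by apply/allcP => -[w|]; [move/allcP: al; apply | rewrite /pcomp /= ?orbT].

Qed.

Theorem theorem3p17 (R : comNzRingType) (x y : R) (t : vposet) :
  Ppoly x y t = Lpoly (@vle t) x y.
Proof.
elim: t => [|a IHa b IHb|a IH|a IH].
- have E : forall A : {set void}, A = set0 by move=> A; apply/setP => -[].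
  rewrite /Lpoly (big_pred1 set0) => [|A].
    by rewrite /bA /sA big_set0 (E [set _ in _ | _]) cards0 !expr0 mulr1.
  rewrite /= (E A) eqxx maxacE; apply/maxacP; split => -[].
- rewrite /= IHa IHb.
  have -> : Lpoly (@vle (VUnion a b)) x y = Lpoly (unr (@vle a) (@vle b)) x y by [].
  by rewrite Lpoly_union.
- rewrite /=; have -> : Lpoly (@vle (VTop a)) x y = Lpoly (topr (@vle a)) x y by [].
  case: (posnP #|vcarrier a|) => Ha.
    by rewrite Lpoly_single.
  rewrite (Lpoly_top (@vle_refl a) (@vle_anti a) (@vle_trans a) x y Ha (I1 Ha) (@I2 a)).
  by rewrite IH.
- rewrite /=; have -> : Lpoly (@vle (VBot a)) x y = Lpoly (botr (@vle a)) x y by [].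
  case: (posnP #|vcarrier a|) => Ha.
    by rewrite Lpoly_single.
  case: (boolP (chain (@vle a))) => ch; last first.
    by rewrite (Lpoly_bot (@vle_refl a) x y Ha ch (I1 Ha)) IH.
  move: Ha; case En: #|vcarrier a| => [//|m] _.
  rewrite IH (Lpoly_chain (@vle_refl a) (@vle_anti a) (@vle_trans a) x y ch En).
  have Eo : #|{: option (vcarrier a)}| = m.+2 by rewrite card_option En.
  rewrite (Lpoly_chain (@vle_refl (VBot a)) (@vle_anti (VBot a)) (@vle_trans (VBot a)) x y (B_chain ch) Eo).
  by rewrite big_ord_recr addrA.
Qed.
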